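(* Let $\mathcal{M}$ be a mesh of $\Omega$, $N\ge 2$, $\delta t=T/N$, and consider any solution of the scheme described in the context. For every dual face $\epsilon$ write $|\mathbf{u}^n_\epsilon|^2=\sum_{i=1}^d(u^n_{\epsilon,i})^2$, and define, for $K\in\mathcal{M}$, $\sigma\in\mathcal{E}(K)$ and $0\le n\le N$, $|K|\,(\rho E_k)^n_K=\frac14\sum_{\sigma\in\mathcal{E}(K)}|D_\sigma|\,\rho^n_{D_\sigma}\,|\mathbf{u}^n_\sigma|^2$, and, for $0\le n\le N-1$, $(G_k)^n_{K,\sigma}=-\frac14\sum_{\epsilon\in\mathcal{E}(D_\sigma),\,\epsilon\subset K}F^n_{\sigma,\epsilon}|\mathbf{u}^n_\epsilon|^2+\frac14\sum_{\epsilon\in\mathcal{E}(D_\sigma),\,\epsilon\not\subset K}F^n_{\sigma,\epsilon}|\mathbf{u}^n_\epsilon|^2$. Then for every $0\le n\le N-2$ and every $K\in\mathcal{M}$, $\frac{|K|}{\delta t}\Big[\big(\rho^{n+2}_Ke^{n+2}_K+(\rho E_k)^{n+1}_K\big)-\big(\rho^{n+1}_Ke^{n+1}_K+(\rho E_k)^n_K\big)\Big]+\sum_{\sigma\in\mathcal{E}(K)}\big(F^{n+1}_{K,\sigma}e^{n+1}_\sigma+(G_k)^n_{K,\sigma}\big)+\sum_{\sigma\in\mathcal{E}(K)\cap\mathcal{E}_{\rm int},\,\sigma=K|L}|\sigma|\,\frac{p^{n+1}_K+p^{n+1}_L}{2}\,\mathbf{u}^{n+1}_\sigma\cdot\ma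thbf{n}_{K,\sigma}=0$.
   Context: Let $\Omega\subset\mathbb{R}^d$ ($1\le d\le 3$) be an open bounded connected polyhedral set and $T>0$. A mesh $\mathcal{M}$ of $\Omega$ is a finite family of compact connected cells with pairwise disjoint interiors whose union is $\overline{\Omega}$; cells are intervals ($d=1$), quadrangles ($d=2$) or hexahedra ($d=3$), and the mesh is conforming. $\mathcal{E}(K)$ is the set of faces of $K$, with $\zeta$ elements ($\zeta=2,4,6$ for $d=1,2,3$); $\mathcal{E}$ is the set of faces, $\mathcal{E}_{\rm int}$ the faces shared by two distinct cells (written $\sigma=K|L$), $\mathcal{E}_{\rm ext}=\mathcal{E}\setminus\mathcal{E}_{\rm int}$; $\mathbf{n}_{K,\sigma}$ unit normal to $\sigma$ outward $K$, $(\mathbf{n}_{K,\sigma})_i$ its $i$-th component; $|A|$ Lebesgue measure. Dual mesh: each $K$ is partitioned into half-diamond cells $D_{K,\sigma}$, $\sigma\in\mathcal{E}(K)$, with $|D_{K,\sigma}|=|K|/\zeta$; $D_\sigma=D_{K,\sigma}\cup D_{L,\sigma}$ if $\sigma=K|L$, $D_\sigma=D_{K,\sigma}$ if $\sigma\in\mathcal{E}_{\rm ext}\cap\mathcal{E}(K)$. A dual face $\epsilon=\sigma|\sigma'$ is the common boundary of two half-diamond cells $D_{K,\sigma},D_{K,\sigma'}$ of a same cell $K$ (connectivity of the reference square/cube), written $\epsilon\subset K$; $\mathcal{E}(D_\sigma)$ is the set of dual faces of $D_\sigma$. Time: $t_n=n\delta t$. The scheme: let $\gamma>1$, $\rho_0,e_0\in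 L^\infty(\Omega)$ with $\rho_0>0$, $e_0>0$, and $\mathbf{u}_0\in L^\infty(\Omega)^d$. A solution is a family of reals $\rho^n_K,e^n_K,p^n_K$ ($K\in\mathcal{M}$) and vectors $\mathbf{u}^n_\sigma=(u^n_{\sigma,1},\dots,u^n_{\sigma,d})$ ($\sigma\in\mathcal{E}$), $0\le n\le N$, such that: (i) $\rho^0_K=\frac{1}{|K|}\int_K\rho_0$, $e^0_K=\frac1{|K|}\int_Ke_0$, $\mathbf{u}^0_\sigma=\frac{1}{|D_\sigma|}\int_{D_\sigma}\mathbf{u}_0$, and $p^n_K=(\gamma-1)\rho^n_Ke^n_K$ for all $n$. (ii) Fluxes: for $\sigma=K|L$, $F^n_{K,\sigma}=|\sigma|\rho^n_\sigma\mathbf{u}^n_\sigma\cdot\mathbf{n}_{K,\sigma}$ with $\rho^n_\sigma$ a convex combination of $\rho^n_K,\rho^n_L$; $F^n_{K,\sigma}=0$ if $\sigma\in\mathcal{E}_{\rm ext}$. Dual densities: $\rho^n_{D_\sigma}=(|D_{K,\sigma}|\rho^n_K+|D_{L,\sigma}|\rho^n_L)/|D_\sigma|$ if $\sigma=K|L$, $\rho^n_{D_\sigma}=\rho^n_K$ if $\sigma\in\mathcal{E}_{\rm ext}\cap\mathcal{E}(K)$. Dual fluxes $F^n_{\sigma,\epsilon}$ ($\epsilon\in\mathcal{E}(D_\sigma)$) satisfy: (a) $F^n_{\sigma,\epsilon}=-F^n_{\sigma',\epsilon}$ for $\epsilon=\sigma|\sigma'$; (b) for every $K$ and $\sigma\in\mathcal{E}(K)$,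 $F^n_{K,\sigma}+\sum_{\epsilon\in\mathcal{E}(D_\sigma),\epsilon\subset K}F^n_{\sigma,\epsilon}=\frac1\zeta\sum_{\sigma'\in\mathcal{E}(K)}F^n_{K,\sigma'}$; (c) for $\epsilon\in\mathcal{E}(D_\sigma)$, $\epsilon\subset K$, $F^n_{\sigma,\epsilon}=\sum_{\sigma'\in\mathcal{E}(K)}\xi_{\epsilon,\sigma'}F^n_{K,\sigma'}$ with real coefficients depending only on the relative positions of $\epsilon,\sigma'$ in the cell (fixed, independent of $K$ and the mesh). (iii) For $0\le n\le N-1$ and $K\in\mathcal{M}$: $\frac{|K|}{\delta t}(\rho^{n+1}_K-\rho^n_K)+\sum_{\sigma\in\mathcal{E}(K)}F^n_{K,\sigma}=0$ and $\frac{|K|}{\delta t}(\rho^{n+1}_Ke^{n+1}_K-\rho^n_Ke^n_K)+\sum_{\sigma\in\mathcal{E}(K)}F^n_{K,\sigma}e^n_\sigma+|K|p^n_K(\operatorname{div}\mathbf{u})^n_K=S^n_K$, where $e^n_\sigma$ is a convex combination of $e^n_K,e^n_L$ for $\sigma=K|L$ and $(\operatorname{div}\mathbf{u})^n_K=\frac1{|K|}\sum_{\sigma\in\mathcal{E}(K)}|\sigma|\mathbf{u}^n_\sigma\cdot\mathbf{n}_{K,\sigma}$. (iv) For $0\le n\le N-1$, $1\le i\le d$ and $\sigma=K|L\in\mathcal{E}_{\rm int}$: $\frac{|D_\sigma|}{\delta t}(\rho^{n+1}_{D_\sigma}u^{n+1}_{\sigma,i}-\rho^n_{D_\sigma}u^n_{\sigma,i})+\sum_{\epsilon\in\mathcal{E}(D_\sigma)}F^n_{\sigma,\epsilon}u^n_{\epsilon,i}+|\sigma|(p^{n+1}_L-p^{n+1}_K)(\mathbf{n}_{K,\sigma})_i=0$,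 where for each dual face $\epsilon=\sigma|\sigma'$, $u^n_{\epsilon,i}$ is a single real which is a convex combination of $u^n_{\sigma,i}$ and $u^n_{\sigma',i}$; for $\sigma\in\mathcal{E}_{\rm ext}\cap\mathcal{E}(K)$, $\mathbf{u}^n_\sigma\cdot\mathbf{n}_{K,\sigma}=0$ for all $n$ and the same equation holds with the pressure term replaced by $g^{n+1}_\sigma(\mathbf{n}_{K,\sigma})_i$ for some real $g^{n+1}_\sigma$. (v) $S^0_K=0$ and, for $0\le n\le N-1$, $S^{n+1}_K=\frac12\sum_{i=1}^d\sum_{\sigma\in\mathcal{E}(K)}R^{n+1}_{\sigma,i}$ with $R^{n+1}_{\sigma,i}=\frac12\frac{|D_\sigma|}{\delta t}\rho^{n+1}_{D_\sigma}(u^{n+1}_{\sigma,i}-u^n_{\sigma,i})^2-\frac12\sum_{\epsilon\in\mathcal{E}(D_\sigma)}F^n_{\sigma,\epsilon}(u^n_{\epsilon,i}-u^n_{\sigma,i})^2+(u^{n+1}_{\sigma,i}-u^n_{\sigma,i})\sum_{\epsilon\in\mathcal{E}(D_\sigma)}F^n_{\sigma,\epsilon}(u^n_{\epsilon,i}-u^n_{\sigma,i})$. *)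

(* Defs.v *)
From HB Require Import structures.
From mathcomp Require Import all_boot all_order all_algebra.
Set Implicit Arguments. Unset Strict Implicit. Unset Printing Implicit Defensive.
Import Order.TTheory GRing.Theory Num.Theory.
Local Open Scope ring_scope.

(* Local face indices of a cell : 'I_(2*d)  (zeta = 2 d faces per cell).
   Convention of the reference cell [0,1]^d: local faces 2k and 2k+1 are the
   two opposite faces orthogonal to the k-th axis. *)

(* Connectivity of the half-diamond cells of the reference cell: the
   half-diamonds of local faces i and j (i <> j) share a dual face iff the
   faces are not opposite (d = 2, 3); for d = 1 the two half-intervals share
   the midpoint of the cell. *)
Definition adj (d : nat) (i j : 'I_(2 * d)) : bool :=
  (i != j) && ((d == 1)%N || (i./2 != j./2)%N).

Record mesh (R : realFieldType) (d : nat) (Cell Face : finType) := Mesh {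
  (* loc K i = the face of K with local index i; E(K) = its image *)
  loc : Cell -> 'I_(2 * d) -> Face;
  loc_inj : forall K, injective (loc K);
  vol : Cell -> R;
  vol_gt0 : forall K, 0 < vol K;
  area : Face -> R;
  area_gt0 : forall s, 0 < area s;
  nrm : Cell -> Face -> 'I_d -> R;
  nrm_unit : forall K i, \sum_(c < d) (nrm K (loc K i) c) ^+ 2 = 1;
  face_cells : forall s,
    (0 < #|[set K | [exists i, loc K i == s]]| <= 2)%N;
  nrm_opp : forall K L i j, K != L -> loc K i = loc L j ->
    nrm L (loc L j) = (fun c => - nrm K (loc K i) c)
}.

Section MeshDefs.
Context (R : realFieldType) (d : nat) (Cell Face : finType)
        (M : mesh R d Cell Face).

Definition zeta : R := (2 * d)%:R.

Definition faceOf (K : Cell) (s : Face) : bool := [exists i, loc M K i == s].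

Definition cellsOf (s : Face) : {set Cell} := [set K | faceOf K s].

Definition interior (s : Face) : bool := #|cellsOf s| == 2%N.

(* |D_{K,sigma}| = |K| / zeta and |D_sigma| *)
Definition Dvol (s : Face) : R := \sum_(K in cellsOf s) vol M K / zeta.

Definition rhoD (rhoK : Cell -> R) (s : Face) : R :=
  (\sum_(K in cellsOf s) (vol M K / zeta) * rhoK K) / Dvol s.

Definition dotn (v : 'I_d -> R) (K : Cell) (s : Face) : R :=
  \sum_(c < d) v c * nrm M K s c.

Definition sqnorm (v : 'I_d -> R) : R := \sum_(c < d) (v c) ^+ 2.

(* Dual faces epsilon of D_sigma contained in a cell K are parametrised by
   (K, i, j) with loc K i = sigma and adj i j: epsilon = sigma | loc K j.
   A quantity attached to (sigma, epsilon) is a function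
   G : Cell -> 'I_(2d) -> 'I_(2d) -> R.                                     *)
Definition dsumK (G : Cell -> 'I_(2 * d) -> 'I_(2 * d) -> R)
  (K : Cell) (s : Face) : R :=
  \sum_(i | loc M K i == s) \sum_(j | adj i j) G K i j.

Definition dsum (G : Cell -> 'I_(2 * d) -> 'I_(2 * d) -> R) (s : Face) : R :=
  \sum_(K : Cell) dsumK G K s.

Definition Fp (rhoS : Face -> R) (u : Face -> 'I_d -> R)
  (K : Cell) (s : Face) : R :=
  if interior s then area M s * rhoS s * dotn (u s) K s else 0.

Definition divu (u : Face -> 'I_d -> R) (K : Cell) : R :=
  (vol M K)^-1 * \sum_(s | faceOf K s) area M s * dotn (u s) K s.

Definition convex2 (x a b : R) : Prop :=
  exists2 l : R, 0 <= l <= 1 & x = l * a + (1 - l) * b.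

Section Scheme.
Variables (dt : R) (N : nat)
  (rho e p : nat -> Cell -> R) (u : nat -> Face -> 'I_d -> R)
  (rhoS eS : nat -> Face -> R)
  (Fd : nat -> Cell -> 'I_(2 * d) -> 'I_(2 * d) -> R)
  (ue : nat -> Cell -> 'I_(2 * d) -> 'I_(2 * d) -> 'I_d -> R)
  (g : nat -> Face -> R)
  (xi : 'I_(2 * d) -> 'I_(2 * d) -> 'I_(2 * d) -> R).

Definition F n := Fp (rhoS n) (u n).

Definition Rterm (n : nat) (s : Face) (c : 'I_d) : R :=
  2^-1 * (Dvol s / dt) * rhoD (rho n.+1) s * (u n.+1 s c - u n s c) ^+ 2
  - 2^-1 * dsum (fun K i j => Fd n K i j * (ue n K i j c - u n s c) ^+ 2) s
  + (u n.+1 s c - u n s c)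
      * dsum (fun K i j => Fd n K i j * (ue n K i j c - u n s c)) s.

Definition Ssrc (n : nat) (K : Cell) : R :=
  if n is n'.+1 then
    2^-1 * \sum_(c < d) \sum_(s | faceOf K s) Rterm n' s c
  else 0.

Record scheme_solution (gamma : R) : Prop := SchemeSolution {
  sol_eos : forall n K, (n <= N)%N -> p n K = (gamma - 1) * rho n K * e n K;
  sol_rhoS : forall n s K L, (n <= N)%N -> K != L -> faceOf K s -> faceOf L s ->
    convex2 (rhoS n s) (rho n K) (rho n L);
  sol_eS : forall n s K L, (n <= N)%N -> K != L -> faceOf K s -> faceOf L s ->
    convex2 (eS n s) (e n K) (e n L);
  sol_dual_a : forall n K i j, (n <= N)%N -> adj i j ->
    Fd n K i j = - Fd n K j i;
  sol_dual_b : forall n K i, (n <= N)%N ->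
    F n K (loc M K i) + \sum_(j | adj i j) Fd n K i j
    = zeta^-1 * \sum_(s | faceOf K s) F n K s;
  sol_dual_c : forall n K i j, (n <= N)%N -> adj i j ->
    Fd n K i j = \sum_(k < 2 * d) xi i j k * F n K (loc M K k);
  sol_ue_sym : forall n K i j c, (n <= N)%N -> adj i j ->
    ue n K i j c = ue n K j i c;
  sol_ue_cvx : forall n K i j c, (n <= N)%N -> adj i j ->
    convex2 (ue n K i j c) (u n (loc M K i) c) (u n (loc M K j) c);
  sol_mass : forall n K, (n < N)%N ->
    vol M K / dt * (rho n.+1 K - rho n K) + \sum_(s | faceOf K s) F n K s = 0;
  sol_energy : forall n K, (n < N)%N ->
    vol M K / dt * (rho n.+1 K * e n.+1 K - rho n K * e n K)
    + \sum_(s | faceOf K s) F n K s * eS n s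
    + vol M K * p n K * divu (u n) K = Ssrc n K;
  sol_mom_int : forall n s K L c, (n < N)%N -> K != L -> faceOf K s -> faceOf L s ->
    Dvol s / dt * (rhoD (rho n.+1) s * u n.+1 s c - rhoD (rho n) s * u n s c)
    + dsum (fun K' i j => Fd n K' i j * ue n K' i j c) s
    + area M s * (p n.+1 L - p n.+1 K) * nrm M K s c = 0;
  sol_bnd_normal : forall n s K, (n <= N)%N -> ~~ interior s -> faceOf K s ->
    dotn (u n s) K s = 0;
  sol_mom_ext : forall n s K c, (n < N)%N -> ~~ interior s -> faceOf K s ->
    Dvol s / dt * (rhoD (rho n.+1) s * u n.+1 s c - rhoD (rho n) s * u n s c)
    + dsum (fun K' i j => Fd n K' i j * ue n K' i j c) s
    + g n.+1 s * nrm M K s c = 0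
}.

Definition rhoEk (n : nat) (K : Cell) : R :=
  (vol M K)^-1 * (4^-1 * \sum_(s | faceOf K s)
                    Dvol s * rhoD (rho n) s * sqnorm (u n s)).

Definition Gk (n : nat) (K : Cell) (s : Face) : R :=
  - 4^-1 * dsumK (fun K' i j => Fd n K' i j * sqnorm (ue n K' i j)) K s
  + 4^-1 * \sum_(K' | K' != K)
             dsumK (fun K'' i j => Fd n K'' i j * sqnorm (ue n K'' i j)) K' s.

End Scheme.
End MeshDefs.

(* Main.v *)
Require Import Defs.
From HB Require Import structures.
From mathcomp Require Import all_boot all_order all_algebra.
From mathcomp Require Import ring lra zify.
Set Implicit Arguments. Unset Strict Implicit. Unset Printing Implicit Defensive.
Import Order.TTheory GRing.Theory Num.Theory.
Local Open Scope ring_scope.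

Lemma dsum_ext (R : realFieldType) (d : nat) (Cell Face : finType)
  (M : mesh R d Cell Face) (G H : Cell -> 'I_(2 * d) -> 'I_(2 * d) -> R) s :
  (forall K i j, G K i j = H K i j) -> dsum M G s = dsum M H s.
Proof.
move=> hGH; rewrite /dsum /dsumK; apply: eq_bigr => K _.
apply: eq_bigr => i _; apply: eq_bigr => j _; exact: hGH.
Qed.

Lemma dsum_lin3 (R : realFieldType) (d : nat) (Cell Face : finType)
  (M : mesh R d Cell Face) (A B C : Cell -> 'I_(2 * d) -> 'I_(2 * d) -> R)
  (x y z : R) s :
  dsum M (fun K i j => x * A K i j + y * B K i j + z * C K i j) s
  = x * dsum M A s + y * dsum M B s + z * dsum M C s.
Proof.
rewrite /dsum /dsumK !mulr_sumr -!big_split; apply: eq_bigr => K _ /=.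
rewrite !mulr_sumr -!big_split; apply: eq_bigr => i _ /=.
by rewrite !mulr_sumr -!big_split.
Qed.

Lemma dsum_sumc (R : realFieldType) (d : nat) (Cell Face : finType)
  (M : mesh R d Cell Face) (G : 'I_d -> Cell -> 'I_(2 * d) -> 'I_(2 * d) -> R) s :
  dsum M (fun K i j => \sum_(c < d) G c K i j) s = \sum_(c < d) dsum M (G c) s.
Proof.
rewrite /dsum /dsumK [RHS]exchange_big; apply: eq_bigr => K _ /=.
rewrite [RHS]exchange_big; apply: eq_bigr => i _ /=.
by rewrite [RHS]exchange_big.
Qed.

Lemma kin_alg (R : realFieldType) (V r' r a b Sf Sw Sw2 D1 D2 P Rt : R) :
  V * (r' - r) + Sf = 0 ->
  V * (r' * a - r * b) + Sw + P = 0 ->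
  D1 = Sw - b * Sf -> D2 = Sw2 - 2 * b * Sw + b ^+ 2 * Sf ->
  Rt = 2^-1 * V * r' * (a - b) ^+ 2 - 2^-1 * D2 + (a - b) * D1 ->
  V * (2^-1 * r' * a ^+ 2 - 2^-1 * r * b ^+ 2) + 2^-1 * Sw2 + P * a + Rt = 0.
Proof.
move=> h1 h2 -> -> ->.
have eSf : Sf = - (V * (r' - r)) by lra.
have eP : P = - (V * (r' * a - r * b) + Sw) by lra.
by rewrite eSf eP; field.
Qed.

Lemma faceOf_loc (R : realFieldType) (d : nat) (Cell Face : finType)
  (M : mesh R d Cell Face) K i : faceOf M K (loc M K i).
Proof. by apply/existsP; exists i. Qed.

Lemma loc_pred1 (R : realFieldType) (d : nat) (Cell Face : finType)
  (M : mesh R d Cell Face) K s : faceOf M K s ->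
  exists i0, forall i, (loc M K i == s) = (i == i0).
Proof.
case/existsP=> i0 /eqP hi0; exists i0 => i; rewrite -hi0.
apply/eqP/eqP => [h|->//]; exact: (loc_inj h).
Qed.

Lemma dsumK_out (R : realFieldType) (d : nat) (Cell Face : finType)
  (M : mesh R d Cell Face) G K s : ~~ faceOf M K s -> dsumK M G K s = 0.
Proof.
move=> hK; rewrite /dsumK big1 // => i /eqP hi.
by move: hK; rewrite -hi faceOf_loc.
Qed.

Lemma dsumK_in (R : realFieldType) (d : nat) (Cell Face : finType)
  (M : mesh R d Cell Face) G K i0 :
  dsumK M G K (loc M K i0) = \sum_(j | adj i0 j) G K i0 j.
Proof.
rewrite /dsumK (big_pred1 i0) // => i /=.
apply/eqP/eqP => [h|->//]; exact: (loc_inj h).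
Qed.

Lemma zeta_gt0 (R : realFieldType) (d : nat) : (1 <= d)%N -> 0 < zeta R d.
Proof. move=> hd; rewrite /zeta ltr0n; rewrite muln_gt0 /=; exact: hd. Qed.

Lemma Dvol_gt0 (R : realFieldType) (d : nat) (Cell Face : finType)
  (M : mesh R d Cell Face) s : (1 <= d)%N -> 0 < Dvol M s.
Proof.
move=> hd; have := face_cells M s; case/andP=> /card_gt0P [K hK] _.
rewrite /Dvol (big_setD1 K) //=.
apply: (@lt_le_trans _ _ (vol M K / zeta R d)).
  by rewrite divr_gt0 ?vol_gt0 ?zeta_gt0.
rewrite lerDl; apply: sumr_ge0 => L _.
by rewrite divr_ge0 ?ltW ?vol_gt0 ?zeta_gt0.
Qed.

Lemma three_in2 (T : finType) (x y a b c : T) :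
  a \in [set x; y] -> b \in [set x; y] -> c \in [set x; y] ->
  a = b \/ a = c \/ b = c.
Proof.
by move=> /set2P[]-> /set2P[]-> /set2P[]->; tauto.
Qed.

Lemma interior_other (R : realFieldType) (d : nat) (Cell Face : finType)
  (M : mesh R d Cell Face) K s : interior M s -> faceOf M K s ->
  exists L0, [/\ L0 != K, faceOf M L0 s &
    forall L, ((L != K) && faceOf M L s) = (L == L0)].
Proof.
move=> /cards2P [x [y [hxy hC]]] hK.
have memC : forall L, faceOf M L s = (L \in [set x; y]).
  by move=> L; rewrite -hC /cellsOf inE.
have hKin : K \in [set x; y] by rewrite -memC.
pose L0 := if K == x then y else x.
have hL0 : L0 \in [set x; y] by rewrite /L0; case: ifP; rewrite !inE eqxx ?orbT.
have hL0K : L0 != K.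
  rewrite /L0; case: ifP => [/eqP ->|/negbT]; first by rewrite eq_sym.
  by rewrite eq_sym.
exists L0; split => //; first by rewrite memC.
move=> L; apply/idP/idP => [/andP[hLK]|/eqP->]; last by rewrite hL0K memC.
rewrite memC => hL.
case: (three_in2 hL hKin hL0) => [e|[e|e]].
- by rewrite e eqxx in hLK.
- by rewrite e eqxx.
- by rewrite e eqxx in hL0K.
Qed.

Lemma sumF_cells (R : realFieldType) (d : nat) (Cell Face : finType)
  (M : mesh R d Cell Face) (rhoS : Face -> R) (u : Face -> 'I_d -> R) s :
  \sum_(K in cellsOf M s) Fp M rhoS u K s = 0.
Proof.
rewrite /Fp; case hint: (interior M s); last by rewrite big1.
move: (hint) => /cards2P [x [y [hxy hC]]].
rewrite hC (@big_setU1 _ _ _ _ x [set y]) /=; last by rewrite inE.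
rewrite big_set1.
have memC : forall L, faceOf M L s = (L \in [set x; y]).
  by move=> L; rewrite -hC /cellsOf inE.
have hx : faceOf M x s by rewrite memC !inE eqxx.
have hy : faceOf M y s by rewrite memC !inE eqxx orbT.
case/existsP: hx => i /eqP hi; case/existsP: hy => j /eqP hj.
have hn := nrm_opp hxy (etrans hi (esym hj)).
rewrite /dotn -mulrDr; apply/eqP; rewrite mulf_eq0; apply/orP; right.
rewrite -big_split /=; apply/eqP; apply: big1 => c _.
have hn' : nrm M y s = fun c => - nrm M x s c by rewrite -{1}hj hn hi.
rewrite hn'; ring.
Qed.

Lemma adjC (d : nat) (i j : 'I_(2 * d)) : adj i j = adj j i.
Proof. by rewrite /adj eq_sym [(i./2 == _)%N]eq_sym. Qed.

Lemma antisym_sum (R : realFieldType) (d : nat) (A B : 'I_(2 * d) -> 'I_(2 * d) -> R) :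
  (forall i j, adj i j -> A i j = - A j i) ->
  (forall i j, adj i j -> B i j = B j i) ->
  \sum_i \sum_(j | adj i j) A i j * B i j = 0.
Proof.
move=> hA hB.
have hX : \sum_i \sum_(j | adj i j) A i j * B i j = - \sum_i \sum_(j | adj i j) A i j * B i j.
  under eq_bigr => i _ do rewrite big_mkcond.
  rewrite [LHS]exchange_big /= -sumrN; apply: eq_bigr => j _.
  rewrite big_mkcond -sumrN; apply: eq_bigr => i _ /=.
  rewrite adjC; case: ifP => h; last by rewrite oppr0.
  have h' : adj i j by rewrite adjC.
  rewrite (hA _ _ h') (hB _ _ h'); ring.
lra.
Qed.

Lemma sum_dsumK (R : realFieldType) (d : nat) (Cell Face : finType)
  (M : mesh R d Cell Face) G K :
  \sum_(s | faceOf M K s) dsumK M G K s = \sum_i \sum_(j | adj i j) G K i j.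
Proof.
rewrite [RHS](partition_big (loc M K) (faceOf M K)) => [|i _]; last exact: faceOf_loc.
by apply: eq_bigr => s _; rewrite /dsumK.
Qed.

Lemma sumGk (R : realFieldType) (d : nat) (Cell Face : finType)
  (M : mesh R d Cell Face) (Fd : nat -> Cell -> 'I_(2 * d) -> 'I_(2 * d) -> R)
  (ue : nat -> Cell -> 'I_(2 * d) -> 'I_(2 * d) -> 'I_d -> R) n K :
  (forall i j, adj i j -> Fd n K i j = - Fd n K j i) ->
  (forall i j c, adj i j -> ue n K i j c = ue n K j i c) ->
  \sum_(s | faceOf M K s) Gk M Fd ue n K s =
  \sum_(s | faceOf M K s) 4^-1 * dsum M (fun K' i j => Fd n K' i j * sqnorm (ue n K' i j)) s.
Proof.
move=> hA hB.
set G := (fun K' i j => Fd n K' i j * sqnorm (ue n K' i j)).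
have e : forall s, Gk M Fd ue n K s = 4^-1 * dsum M G s - 2^-1 * dsumK M G K s.
  by move=> s; rewrite /Gk /dsum [X in _ = 4^-1 * X - _](bigD1 K) //= -/G; field.
under eq_bigr => s _ do rewrite e.
rewrite sumrB -[X in _ - X]mulr_sumr sum_dsumK.
rewrite /G antisym_sum ?mulr0 ?subr0 //.
move=> i j h; rewrite /sqnorm; apply: eq_bigr => c _; by rewrite hB.
Qed.

Lemma dual_mass (R : realFieldType) (d : nat) (Cell Face : finType)
  (M : mesh R d Cell Face) (dt : R) (N : nat) (gamma : R)
  (rho e p : nat -> Cell -> R) (u : nat -> Face -> 'I_d -> R)
  (rhoS eS : nat -> Face -> R)
  (Fd : nat -> Cell -> 'I_(2 * d) -> 'I_(2 * d) -> R)
  (ue : nat -> Cell -> 'I_(2 * d) -> 'I_(2 * d) -> 'I_d -> R)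
  (g : nat -> Face -> R)
  (xi : 'I_(2 * d) -> 'I_(2 * d) -> 'I_(2 * d) -> R) n s :
  scheme_solution M dt N rho e p u rhoS eS Fd ue g xi gamma ->
  (1 <= d)%N -> dt != 0 -> (n < N)%N ->
  Dvol M s / dt * (rhoD M (rho n.+1) s - rhoD M (rho n) s) + dsum M (Fd n) s = 0.
Proof.
move=> hsol hd hdt hn.
have hDv : Dvol M s != 0 by rewrite gt_eqF // Dvol_gt0.
have hz : zeta R d != 0 by rewrite gt_eqF // zeta_gt0.
have eK : forall K, faceOf M K s -> dsumK M (Fd n) K s =
    (zeta R d)^-1 * (- (vol M K / dt * (rho n.+1 K - rho n K))) - F M u rhoS n K s.
  move=> K hK; have [i0 hi0] := loc_pred1 hK.
  have hs : loc M K i0 = s by apply/eqP; rewrite hi0.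
  rewrite -hs dsumK_in.
  have hb := sol_dual_b hsol K i0 (ltnW hn).
  have hm := sol_mass hsol K hn.
  have hS : \sum_(s0 | faceOf M K s0) F M u rhoS n K s0 =
            - (vol M K / dt * (rho n.+1 K - rho n K)) by lra.
  rewrite hS in hb; lra.
have -> : dsum M (Fd n) s = \sum_(K in cellsOf M s)
    ((zeta R d)^-1 * (- (vol M K / dt * (rho n.+1 K - rho n K))) - F M u rhoS n K s).
  rewrite /dsum (bigID (fun K => faceOf M K s)) /=.
  rewrite [X in _ + X]big1 ?addr0; last by move=> K hK; rewrite dsumK_out.
  apply: eq_big => [K|K hK]; first by rewrite inE.
  exact: eK.
rewrite sumrB sumF_cells subr0 /rhoD.
set A := \sum_(K in cellsOf M s) vol M K / zeta R d * rho n.+1 K.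
set B := \sum_(K in cellsOf M s) vol M K / zeta R d * rho n K.
have -> : Dvol M s / dt * (A / Dvol M s - B / Dvol M s) = (A - B) / dt.
  by field; rewrite ?hdt ?hDv ?hz.
rewrite /A /B -sumrB mulr_suml -big_split /=; apply: big1 => K _.
by field; rewrite hdt pnatr_eq0 -lt0n.
Qed.

Theorem mainTheorem4 (R : realFieldType) (d : nat) (Cell Face : finType)
  (M : mesh R d Cell Face) (T : R) (N : nat) (gamma : R)
  (rho e p : nat -> Cell -> R) (u : nat -> Face -> 'I_d -> R)
  (rhoS eS : nat -> Face -> R)
  (Fd : nat -> Cell -> 'I_(2 * d) -> 'I_(2 * d) -> R)
  (ue : nat -> Cell -> 'I_(2 * d) -> 'I_(2 * d) -> 'I_d -> R)
  (g : nat -> Face -> R)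
  (xi : 'I_(2 * d) -> 'I_(2 * d) -> 'I_(2 * d) -> R) :
  (1 <= d <= 3)%N -> 0 < T -> (2 <= N)%N -> 1 < gamma ->
  scheme_solution M (T / N%:R) N rho e p u rhoS eS Fd ue g xi gamma ->
  forall (n : nat) (K : Cell), (n <= N - 2)%N ->
    vol M K / (T / N%:R) *
      ((rho n.+2 K * e n.+2 K + rhoEk M rho u n.+1 K)
       - (rho n.+1 K * e n.+1 K + rhoEk M rho u n K))
    + \sum_(s | faceOf M K s)
        (F M u rhoS n.+1 K s * eS n.+1 s + Gk M Fd ue n K s)
    + \sum_(s | faceOf M K s && interior M s)
        \sum_(L | (L != K) && faceOf M L s)
          area M s * ((p n.+1 K + p n.+1 L) / 2) * dotn M (u n.+1 s) K s
    = 0.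
Proof.
move=> /andP[hd _] hT hN _ hsol n K hn.
set dt := T / N%:R.
have hdt : dt != 0.
  by rewrite gt_eqF // divr_gt0 // ltr0n; lia.
have hn0 : (n < N)%N by lia.
have hn1 : (n.+1 < N)%N by lia.
have hnle : (n <= N)%N by lia.
have hvol : vol M K != 0 by rewrite gt_eqF // vol_gt0.
pose phi s :=
  4^-1 * (Dvol M s / dt) * (rhoD M (rho n.+1) s * sqnorm (u n.+1 s)
                            - rhoD M (rho n) s * sqnorm (u n s))
  + 2^-1 * \sum_(c < d) Rterm M dt rho u Fd ue n s c
  - area M s * p n.+1 K * dotn M (u n.+1 s) K s
  + 4^-1 * dsum M (fun K' i j => Fd n K' i j * sqnorm (ue n K' i j)) s
  + (if interior M s then \sum_(L | (L != K) && faceOf M L s)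
        area M s * ((p n.+1 K + p n.+1 L) / 2) * dotn M (u n.+1 s) K s
     else 0).
have hphi : forall s, faceOf M K s -> phi s = 0.
  move=> s hK; rewrite /phi.
  have hm := dual_mass s hsol hd hdt hn0.
  have gen : forall Pc : 'I_d -> R,
    (forall c, Dvol M s / dt * (rhoD M (rho n.+1) s * u n.+1 s c - rhoD M (rho n) s * u n s c)
       + dsum M (fun K' i j => Fd n K' i j * ue n K' i j c) s + Pc c = 0) ->
    4^-1 * (Dvol M s / dt) * (rhoD M (rho n.+1) s * sqnorm (u n.+1 s)
                            - rhoD M (rho n) s * sqnorm (u n s))
    + 2^-1 * \sum_(c < d) Rterm M dt rho u Fd ue n s c
    + 2^-1 * \sum_(c < d) Pc c * u n.+1 s c
    + 4^-1 * dsum M (fun K' i j => Fd n K' i j * sqnorm (ue n K' i j)) s = 0.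
    move=> Pc hmom.
    have hc : forall c,
      Dvol M s / dt * (2^-1 * rhoD M (rho n.+1) s * u n.+1 s c ^+ 2
                       - 2^-1 * rhoD M (rho n) s * u n s c ^+ 2)
      + 2^-1 * dsum M (fun K' i j => Fd n K' i j * ue n K' i j c ^+ 2) s
      + Pc c * u n.+1 s c + Rterm M dt rho u Fd ue n s c = 0.
      move=> c; apply: kin_alg; [exact: hm | exact: hmom | | | by rewrite /Rterm].
        rewrite (@dsum_ext _ _ _ _ M _ (fun K' i j => 1 * (Fd n K' i j * ue n K' i j c)
                 + (- u n s c) * Fd n K' i j + 0 * Fd n K' i j) s) => [|K' i j]; last by ring.
        rewrite dsum_lin3; ring.
      rewrite (@dsum_ext _ _ _ _ M _ (fun K' i j => 1 * (Fd n K' i j * ue n K' i j c ^+ 2)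
               + (- (2 * u n s c)) * (Fd n K' i j * ue n K' i j c)
               + (u n s c ^+ 2) * Fd n K' i j) s) => [|K' i j]; last by ring.
      rewrite dsum_lin3; ring.
    have hs : \sum_(c < d) Dvol M s / dt * (2^-1 * rhoD M (rho n.+1) s * u n.+1 s c ^+ 2
                       - 2^-1 * rhoD M (rho n) s * u n s c ^+ 2)
      + \sum_(c < d) 2^-1 * dsum M (fun K' i j => Fd n K' i j * ue n K' i j c ^+ 2) s
      + \sum_(c < d) Pc c * u n.+1 s c + \sum_(c < d) Rterm M dt rho u Fd ue n s c = 0.
      by rewrite -!big_split; apply: big1 => c _; exact: hc.
    have e1 : \sum_(c < d) Dvol M s / dt * (2^-1 * rhoD M (rho n.+1) s * u n.+1 s c ^+ 2
                       - 2^-1 * rhoD M (rho n) s * u n s c ^+ 2)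
      = 2^-1 * (Dvol M s / dt) * (rhoD M (rho n.+1) s * sqnorm (u n.+1 s)
                            - rhoD M (rho n) s * sqnorm (u n s)).
      rewrite /sqnorm !mulr_sumr -sumrB mulr_sumr; apply: eq_bigr => c _; ring.
    have e2 : \sum_(c < d) 2^-1 * dsum M (fun K' i j => Fd n K' i j * ue n K' i j c ^+ 2) s
      = 2^-1 * dsum M (fun K' i j => Fd n K' i j * sqnorm (ue n K' i j)) s.
      rewrite -mulr_sumr -dsum_sumc; congr (_ * _); apply: dsum_ext => K' i j.
      by rewrite /sqnorm mulr_sumr.
    rewrite e1 e2 in hs; lra.
  case hint: (interior M s).
  - have [L0 [hL0K hL0 hpred]] := interior_other hint hK.
    rewrite (big_pred1 L0) //.
    have := gen (fun c => area M s * (p n.+1 L0 - p n.+1 K) * nrm M K s c).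
    have hKL : K != L0 by rewrite eq_sym.
    move=> /(_ (fun c => sol_mom_int hsol c hn0 hKL hK hL0)).
    have -> : \sum_(c < d) area M s * (p n.+1 L0 - p n.+1 K) * nrm M K s c * u n.+1 s c
       = area M s * (p n.+1 L0 - p n.+1 K) * dotn M (u n.+1 s) K s.
      by rewrite /dotn mulr_sumr; apply: eq_bigr => c _; ring.
    lra.
  - have hb : dotn M (u n.+1 s) K s = 0.
      by apply: (sol_bnd_normal hsol) => //; rewrite ?hint // ltnW.
    have := gen (fun c => g n.+1 s * nrm M K s c).
    move=> /(_ (fun c => sol_mom_ext hsol c hn0 (negbT hint) hK)).
    have -> : \sum_(c < d) g n.+1 s * nrm M K s c * u n.+1 s c
       = g n.+1 s * dotn M (u n.+1 s) K s.
      by rewrite /dotn mulr_sumr; apply: eq_bigr => c _; ring.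
    rewrite hb; lra.
have hsumphi : \sum_(s | faceOf M K s) phi s = 0 by apply: big1.
rewrite /phi !big_split sumrN /= in hsumphi.
have hE := sol_energy hsol K hn1.
have eSr : Ssrc M dt rho u Fd ue n.+1 K = \sum_(s | faceOf M K s)
    2^-1 * \sum_(c < d) Rterm M dt rho u Fd ue n s c.
  by rewrite /Ssrc exchange_big mulr_sumr.
have eDiv : vol M K * p n.+1 K * divu M (u n.+1) K =
    \sum_(s | faceOf M K s) area M s * p n.+1 K * dotn M (u n.+1 s) K s.
  rewrite /divu.
  have -> : vol M K * p n.+1 K * ((vol M K)^-1 *
      \sum_(s | faceOf M K s) area M s * dotn M (u n.+1 s) K s) =
      p n.+1 K * \sum_(s | faceOf M K s) area M s * dotn M (u n.+1 s) K s.
    by field.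
  by rewrite mulr_sumr; apply: eq_bigr => s _; ring.
have eEk : vol M K / dt * (rhoEk M rho u n.+1 K - rhoEk M rho u n K) =
    \sum_(s | faceOf M K s) 4^-1 * (Dvol M s / dt) *
       (rhoD M (rho n.+1) s * sqnorm (u n.+1 s) - rhoD M (rho n) s * sqnorm (u n s)).
  rewrite /rhoEk.
  set S1 := \sum_(s | faceOf M K s) _.
  set S0 := \sum_(s | faceOf M K s) _.
  have -> : vol M K / dt * ((vol M K)^-1 * (4^-1 * S1) - (vol M K)^-1 * (4^-1 * S0))
     = (S1 - S0) * (4^-1 / dt) by field; rewrite ?hvol ?hdt.
  rewrite /S1 /S0 -sumrB mulr_suml; apply: eq_bigr => s _.
  by field.
rewrite eSr eDiv in hE.
rewrite big_split /= sumGk; last 2 first.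
- by move=> i j h; apply: (sol_dual_a hsol).
- by move=> i j c h; apply: (sol_ue_sym hsol).
rewrite big_mkcondr /=.
rewrite -/dt in hE; lra.
Qed.
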